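(* Let $\mathbb{G}$ be a stratified group. Then $\mathbb{R}$ factorizes $\mathbb{G}$; that is: $\mathbb{R}$ is an h-quotient of $\mathbb{G}$ and every normal homogeneous subgroup $N$ of $\mathbb{G}$ with $\mathbb{G}/N$ h-isomorphic to $\mathbb{R}$ has a complementary homogeneous subgroup; and $\mathbb{R}$ h-embeds into $\mathbb{G}$ and every homogeneous subgroup $H$ of $\mathbb{G}$ h-isomorphic to $\mathbb{R}$ has a complementary normal homogeneous subgroup.
   Context: Graded group: connected simply connected real Lie group with Lie algebra $V_1\oplus\cdots\oplus V_\iota$, $[V_i,V_j]\subset V_{i+j}$; stratified if $[V_i,V_j]=V_{i+j}$; dilations act by $r^i$ on $V_i$. $\mathbb{R}^k$ is the graded group with single layer and dilations $v\mapsto rv$. h-homomorphism: group homomorphism commuting with dilations; h-isomorphism: invertible h-homomorphism. Homogeneous subgroup: closed connected simply connected Lie subgroup invariant under dilations. $\mathbb{M}$ is an h-quotient of $\mathbb{G}$ if $\mathbb{G}/N$ is h-isomorphic to $\mathbb{M}$ for some normal homogeneous subgroup $N$; $\mathbb{M}$ h-embeds into $\mathbb{G}$ if some homogeneous subgroup of $\mathbb{G}$ is h-isomorphic to $\mathbb{M}$. Homogeneous subgroups $A,B$ are complementary if $AB=\mathbb{G}$ and $A\cap B=\{e\}$. *)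

(* Defs.v *)
From HB Require Import structures.
From mathcomp Require Import all_boot all_order all_algebra.
From mathcomp Require Import all_classical all_reals all_analysis.
Set Implicit Arguments. Unset Strict Implicit. Unset Printing Implicit Defensive.
Import Order.TTheory GRing.Theory Num.Theory.
Local Open Scope ring_scope.
Local Open Scope classical_set_scope.

Definition poly_fun (R : realType) (k : nat) (f : 'rV[R]_k -> R) : Prop :=
  exists s : seq (R * ('I_k -> nat)),
    forall x, f x = \sum_(m <- s) m.1 * \prod_(i < k) x ord0 i ^+ m.2 i.

Definition wdil (R : realType) (n : nat) (w : 'I_n -> nat) (r : R) (x : 'rV[R]_n)
  : 'rV[R]_n := \row_i (r ^+ w i * x ord0 i).

(* A graded group, presented in exponential(-type) coordinates as R^n with a
   polynomial group law for which the weighted dilations are automorphisms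
   (a "homogeneous group" in the sense of Folland--Stein).  Layer V_j of the
   Lie algebra (identified with R^n = T_0) is spanned by the coordinates of
   weight j. *)
Record gradedGroup (R : realType) := GradedGroup {
  gdim : nat;
  gwt : 'I_gdim -> nat;
  gmul : 'rV[R]_gdim -> 'rV[R]_gdim -> 'rV[R]_gdim;
  ginv : 'rV[R]_gdim -> 'rV[R]_gdim;
  gwt_pos : forall i, (0 < gwt i)%N;
  gmulA : associative gmul;
  gmul0x : left_id 0 gmul;
  gmulx0 : right_id 0 gmul;
  gmulVx : forall x, gmul (ginv x) x = 0;
  gmulxV : forall x, gmul x (ginv x) = 0;
  gmul_poly : forall i : 'I_gdim,
    poly_fun (fun z : 'rV[R]_(gdim + gdim) => gmul (lsubmx z) (rsubmx z) ord0 i);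
  gdil_morph : forall (r : R) x y, 0 < r ->
    wdil gwt r (gmul x y) = gmul (wdil gwt r x) (wdil gwt r y)
}.

Arguments gdim {R} g.
Arguments gwt {R} g i.
Arguments gmul {R} g x y.
Arguments ginv {R} g x.

Unset Implicit Arguments.
Section GradedDefs.
Context {R : realType} (G : gradedGroup R).
Local Notation V := ('rV[R^o]_(gdim G)).

Definition dil (r : R) (x : V) : V := wdil (gwt G) r x.

Definition gcomm (x y : V) : V :=
  gmul G (gmul G (gmul G x y) (ginv G x)) (ginv G y).

(* Lie bracket on the Lie algebra T_0 = R^n: second-order part of the
   group commutator, [X,Y] = lim_{t->0+} t^-2 (tX)(tY)(tX)^-1(tY)^-1. *)
Definition bracket (X Y : V) : V :=
  lim ((fun t : R => t^-2 *: gcomm (t *: X) (t *: Y)) @ 0^'+).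

Definition layer (j : nat) : set V :=
  [set v | forall i, gwt G i != j -> v ord0 i = 0].

(* [V_1, V_j] : linear span of brackets (bilinearity lets us use finite sums) *)
Definition bracket_span (A B : set V) : set V :=
  [set Z | exists s : seq (V * V),
     (forall p, p \in s -> A p.1 /\ B p.2) /\ Z = \sum_(p <- s) bracket p.1 p.2].

Definition stratified : Prop :=
  forall j, (0 < j)%N -> layer j.+1 = bracket_span (layer 1) (layer j).

Definition is_subgroup (H : set V) : Prop :=
  H 0 /\ (forall x y, H x -> H y -> H (gmul G x y)) /\ (forall x, H x -> H (ginv G x)).

Definition homogeneous (H : set V) : Prop :=
  is_subgroup H /\ closed H /\ connected H /\
  (forall r x, 0 < r -> H x -> H (dil r x)).

Definition normal (N : set V) : Prop :=
  forall g x, N x -> N (gmul G (gmul G g x) (ginv G g)).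

Definition complementary (A B : set V) : Prop :=
  (forall g, exists a b, A a /\ B b /\ g = gmul G a b) /\
  (forall x, A x -> B x -> x = 0).

Definition hhom_to_R (phi : V -> R) : Prop :=
  (forall x y, phi (gmul G x y) = phi x + phi y) /\
  (forall r x, 0 < r -> phi (dil r x) = r * phi x).

Definition hhom_from_R (psi : R -> V) : Prop :=
  (forall s t, psi (s + t) = gmul G (psi s) (psi t)) /\
  (forall r t, 0 < r -> psi (r * t) = dil r (psi t)).

(* G/N is h-isomorphic to R: there is a surjective h-homomorphism G -> R
   with kernel N (equivalently, an h-isomorphism G/N -> R). *)
Definition quotient_is_R (N : set V) : Prop :=
  exists phi : V -> R, hhom_to_R phi /\ (forall t, exists x, phi x = t) /\
    (forall x, phi x = 0 <-> N x).

Definition subgroup_is_R (H : set V) : Prop :=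
  exists psi : R -> V, hhom_from_R psi /\ injective psi /\
    (forall x, H x <-> exists t, psi t = x).

End GradedDefs.

(* Main.v *)
Require Import Defs.
From HB Require Import structures.
From mathcomp Require Import all_boot all_order all_algebra.
From mathcomp Require Import all_classical all_reals all_analysis.
From mathcomp Require Import zify ring lra.
Import Order.TTheory GRing.Theory Num.Theory numFieldNormedType.Exports.
Local Open Scope ring_scope.
Local Open Scope classical_set_scope.

Lemma row_cont (R : realType) (T : topologicalType) n (f : 'I_n -> T -> R^o) :
  (forall i, continuous (f i)) -> continuous (fun t => (\row_i f i t : 'rV[R^o]_n)).
Proof.
move=> fc t A [P /= Pn sPA].
apply: (filterS (P := [set s | forall i j, P i j ((\row_i f i s : 'rV[R^o]_n) i j)])).
  by move=> s Ps; apply: sPA.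
apply: filter_forall => i; apply: filter_forall => j.
have := fc j t (P i j); move: (Pn i j); rewrite mxE => Pn0 /(_ Pn0).
move=> H; near=> s; rewrite mxE; near: s; exact: H.
Unshelve. all: by end_near. Qed.

Lemma connected_range (R : realType) (T : topologicalType) (g : R -> T) :
  continuous g -> connected (range g).
Proof.
move=> gc; apply: connected_continuous_connected.
  by apply/connected_intervalP => x y _ _ z _.
by move=> x; apply: continuous_subspaceT.
Qed.

Lemma coord_poly_cont (R : realType) n (P : {poly R}) k :
  continuous (fun g : 'rV[R^o]_n => P.[g 0 k]).
Proof.
move=> g; apply: (@continuous_comp _ _ _ (fun g : 'rV[R^o]_n => g 0 k) (horner P)).
  exact: coord_continuous.
exact: continuous_horner.
Qed.

Lemma poly_cont (R : realType) (P : {poly R}) : continuous (fun t : R => (P.[t] : R^o)).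
Proof. exact: continuous_horner. Qed.

Section Alg.
Variables (R : realType) (G : gradedGroup R).
Local Notation n := (gdim G).
Local Notation w := (gwt G).
Local Notation mul := (gmul G).
Local Notation inv := (ginv G).

Lemma cancel_inv (a b : 'rV[R]_n) : mul a b = 0 -> inv a = b.
Proof.
by move=> h; rewrite -[inv a](@gmulx0 _ G) -h gmulA gmulVx gmul0x.
Qed.

Lemma inv0 : inv 0 = 0.
Proof. by apply: cancel_inv; rewrite gmul0x. Qed.

Lemma wdil_comp r s (x : 'rV[R]_n) : wdil w r (wdil w s x) = wdil w (r * s) x.
Proof. by apply/rowP => i; rewrite !mxE exprMn mulrA. Qed.

Lemma wdil0x (x : 'rV[R]_n) : wdil w 0 x = 0.
Proof.
apply/rowP => i; rewrite !mxE expr0n.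
by have := @gwt_pos _ G i; case: (w i) => // k _; rewrite mul0r.
Qed.

Lemma wdilE r (x : 'rV[R]_n) i : wdil w r x 0 i = r ^+ w i * x 0 i.
Proof. by rewrite mxE. Qed.

Lemma wdilx0 r : wdil w r (0 : 'rV[R]_n) = 0.
Proof. by apply/rowP => i; rewrite !mxE mulr0. Qed.

Lemma wdil1 (x : 'rV[R]_n) : wdil w 1 x = x.
Proof. by apply/rowP => i; rewrite !mxE expr1n mul1r. Qed.

Definition ridx (j : 'I_(n + n)) : 'I_n :=
  match fintype.split j with inl k => k | inr k => k end.
Definition W j := w (ridx j).
Definition mono (m : 'I_(n + n) -> nat) (z : 'rV[R]_(n + n)) :=
  \prod_(j < n + n) z 0 j ^+ m j.
Definition wt (m : 'I_(n + n) -> nat) := (\sum_(j < n + n) m j * W j)%N.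

Lemma W_pos j : (0 < W j)%N.
Proof. exact: gwt_pos. Qed.

Lemma rowmx_dil r (a b : 'rV[R]_n) j :
  row_mx (wdil w r a) (wdil w r b) 0 j = r ^+ W j * row_mx a b 0 j.
Proof. by rewrite !mxE /W /ridx; case: (fintype.split j) => k; rewrite mxE. Qed.

Lemma mono_dil r (a b : 'rV[R]_n) m :
  mono m (row_mx (wdil w r a) (wdil w r b)) = r ^+ wt m * mono m (row_mx a b).
Proof.
rewrite /mono /wt.
under eq_bigr do rewrite rowmx_dil exprMn -exprM.
by rewrite big_split /= prodrXr; under eq_bigr do rewrite mulnC.
Qed.

Lemma poly_nat_roots (P : {poly R}) : (forall k : nat, P.[k.+1%:R] = 0) -> P = 0.
Proof.
move=> h; apply/eqP; apply: contraT => nz.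
have := max_poly_roots nz (rs := [seq (k.+1)%:R | k <- iota 0 (size P)]).
rewrite size_map size_iota ltnn; apply.
  by apply/allP => x /mapP [k _ ->]; apply/rootP/h.
rewrite map_inj_uniq ?iota_uniq // => a b /eqP; rewrite eqr_nat => /eqP [].
done.
Qed.

Lemma gmul_homog i : exists s : seq (R * ('I_(n + n) -> nat)),
  forall a b, mul a b 0 i = \sum_(m <- s | wt m.2 == w i) m.1 * mono m.2 (row_mx a b).
Proof.
have [s hs] := @gmul_poly _ G i; exists s => a b.
have E z : mul (lsubmx z) (rsubmx z) 0 i = \sum_(m <- s) m.1 * mono m.2 z := hs z.
pose z := row_mx a b.
pose P : {poly R} := \sum_(m <- s) (m.1 * mono m.2 z) *: 'X^(wt m.2)
   - (mul a b 0 i) *: 'X^(w i).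
have P0 : P = 0.
  apply: poly_nat_roots => k; set r : R := k.+1%:R.
  have rpos : 0 < r by rewrite ltr0Sn.
  rewrite /P hornerD hornerN horner_sum hornerZ hornerXn.
  under eq_bigr do rewrite hornerZ hornerXn.
  have := E (row_mx (wdil w r a) (wdil w r b)).
  rewrite row_mxKl row_mxKr -gdil_morph // mxE.
  under [X in _ = X]eq_bigr do rewrite mono_dil.
  move=> h; apply/eqP; rewrite subr_eq0 mulrC h.
  apply/eqP; apply: eq_bigr => m _ /=; rewrite /z; ring.
have := congr1 (fun p : {poly R} => p`_(w i)) P0.
rewrite coef0 /P coefB coef_sum coefZ coefXn eqxx mulr1.
under eq_bigr do rewrite coefZ coefXn.
move/eqP; rewrite subr_eq0 => /eqP <-.
rewrite [RHS]big_mkcond /=; apply: eq_bigr => m _; rewrite eq_sym.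
by case: (wt m.2 == w i); rewrite ?mulr1 ?mulr0.
Qed.


Lemma rowB m (x y : 'rV[R]_m) k : (x - y) 0 k = x 0 k - y 0 k.
Proof. by rewrite !mxE. Qed.

Lemma rowD m (x y : 'rV[R]_m) k : (x + y) 0 k = x 0 k + y 0 k.
Proof. by rewrite !mxE. Qed.

Lemma low_rowmx i (a b a' b' : 'rV[R]_n) :
  (forall k, (w k < w i)%N -> a 0 k = a' 0 k) ->
  (forall k, (w k < w i)%N -> b 0 k = b' 0 k) ->
  forall j, (W j < w i)%N -> row_mx a b 0 j = row_mx a' b' 0 j.
Proof.
by move=> ha hb j; rewrite /W /ridx !mxE; case: (fintype.split j) => k; [exact: ha|exact: hb].
Qed.

Definition lowonly i (m : 'I_(n + n) -> nat) :=
  [forall j, (0 < m j)%N ==> (W j < w i)%N].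

Lemma single i m : wt m = w i -> ~~ lowonly i m ->
  exists j0, forall z, mono m z = z 0 j0.
Proof.
move=> wm /forallPn [j0]; rewrite negb_imply -leqNgt => /andP [mpos Wge].
have e : (m j0 * W j0 + \sum_(j < n + n | j != j0) m j * W j)%N = w i.
  by rewrite -wm /wt [in RHS](bigD1 j0).
have Wp := W_pos j0.
have m1 : m j0 = 1%N.
  nia.
have rest : (\sum_(j < n + n | j != j0) m j * W j == 0)%N.
  by apply/eqP; move: e; rewrite m1; lia.
have mz j : j != j0 -> m j = 0%N.
  move=> jn; move: rest; rewrite sum_nat_eq0 => /forallP /(_ j).
  by rewrite jn /= muln_eq0 => /orP [/eqP //|]; have := W_pos j; case: (W j).
exists j0 => z; rewrite /mono (bigD1 j0) //= m1 expr1 big1 ?mulr1 //.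
by move=> j /mz ->; rewrite expr0.
Qed.

Lemma key i (a b a' b' : 'rV[R]_n) :
  (forall j, (w j < w i)%N -> a 0 j = a' 0 j /\ b 0 j = b' 0 j) ->
  mul a b 0 i - a 0 i - b 0 i = mul a' b' 0 i - a' 0 i - b' 0 i.
Proof.
move=> hab.
have [s hs] := gmul_homog i.
pose Low z := \sum_(m <- s | (wt m.2 == w i) && lowonly i m.2) m.1 * mono m.2 z.
pose Lin z := \sum_(m <- s | (wt m.2 == w i) && ~~ lowonly i m.2) m.1 * mono m.2 z.
have FE (x y : 'rV[R]_n) : mul x y 0 i = Low (row_mx x y) + Lin (row_mx x y).
  by rewrite hs (bigID (fun m => lowonly i m.2)).
have LowE (z z' : 'rV[R]_(n + n)) : (forall j, (W j < w i)%N -> z 0 j = z' 0 j) -> Low z = Low z'.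
  move=> hz; apply: eq_bigr => m /andP [_ lo]; congr (_ * _).
  apply: eq_bigr => j _; case: (posnP (m.2 j)) => [->|pos]; first by rewrite !expr0.
  by rewrite hz //; exact: (implyP (forallP lo j) pos).
have LinD (z z' : 'rV[R]_(n + n)) : Lin (z + z') = Lin z + Lin z'.
  rewrite -big_split; apply: eq_bigr => m /andP [/eqP wm nlo].
  by have [j0 hj0] := @single i m.2 wm nlo; rewrite !hj0 mxE mulrDr.
have Lin0 : Lin 0 = 0.
  by apply: (addrI (Lin 0)); rewrite addr0 -LinD addr0.
have Low0 : Low 0 = 0.
  have := FE 0 0; rewrite gmul0x row_mx0 Lin0 addr0 mxE; by move=> <-.
have LinA (x : 'rV[R]_n) : (forall k, (w k < w i)%N -> x 0 k = 0) -> Lin (row_mx x 0) = x 0 i.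
  move=> hx; have := FE x 0; rewrite gmulx0.
  rewrite (LowE (row_mx x 0) 0) ?Low0 ?add0r // => j hj.
  rewrite -(row_mx0 R 1 n n); apply: (@low_rowmx i) => // k hk; by rewrite mxE ?hx.
have LinB (x : 'rV[R]_n) : (forall k, (w k < w i)%N -> x 0 k = 0) -> Lin (row_mx 0 x) = x 0 i.
  move=> hx; have := FE 0 x; rewrite gmul0x.
  rewrite (LowE (row_mx 0 x) 0) ?Low0 ?add0r // => j hj.
  rewrite -(row_mx0 R 1 n n); apply: (@low_rowmx i) => // k hk; by rewrite mxE ?hx.
have ez : row_mx a b = row_mx (a - a') 0 + row_mx 0 (b - b') + row_mx a' b'.
  by rewrite !add_row_mx addr0 add0r !subrK.
have hlow : Low (row_mx a b) = Low (row_mx a' b').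
  apply: LowE; apply: low_rowmx => k hk; by have [] := hab k hk.
have hlin : Lin (row_mx a b) = (a - a') 0 i + (b - b') 0 i + Lin (row_mx a' b').
  rewrite ez !LinD LinA ?LinB // => k hk; rewrite rowB; have [ha hb] := hab k hk;
  by rewrite ?ha ?hb subrr.
rewrite !FE hlow hlin !rowB; ring.
Qed.


Lemma zero_entry m (k : 'I_m) : (0 : 'rV[R]_m) 0 k = 0.
Proof. by rewrite mxE. Qed.

Lemma add_low i (a b : 'rV[R]_n) :
  (forall j, (w j < w i)%N -> a 0 j = 0 /\ b 0 j = 0) ->
  mul a b 0 i = a 0 i + b 0 i.
Proof.
move=> h; have e := @key i a b 0 0 (fun j hj => ltac:(rewrite !zero_entry; exact: h j hj)).
rewrite gmul0x !zero_entry !subr0 in e.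
by apply/eqP; rewrite -subr_eq0 opprD addrA e.
Qed.

Lemma add_w1 i (a b : 'rV[R]_n) : w i = 1%N -> mul a b 0 i = a 0 i + b 0 i.
Proof.
move=> wi; apply: add_low => j; rewrite wi ltnS leqn0 => /eqP wj.
by have := @gwt_pos _ G j; rewrite wj.
Qed.

Lemma inv_w1 i (a : 'rV[R]_n) : w i = 1%N -> inv a 0 i = - a 0 i.
Proof.
move=> wi; have := @add_w1 i a (inv a) wi; rewrite gmulxV zero_entry => /eqP.
by rewrite eq_sym addrC addr_eq0 => /eqP.
Qed.

Definition Gge m (x : 'rV[R]_n) := forall j, (w j < m)%N -> x 0 j = 0.

Lemma Gge_add {m} {a b : 'rV[R]_n} : Gge m a -> Gge m b ->
  forall i, (w i <= m)%N -> mul a b 0 i = a 0 i + b 0 i.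
Proof.
move=> ha hb i hi; apply: add_low => j hj; split; [apply: ha|apply: hb]; lia.
Qed.

Lemma Gge_mul {m} {a b : 'rV[R]_n} : Gge m a -> Gge m b -> Gge m (mul a b).
Proof.
move=> ha hb j hj; rewrite (Gge_add ha hb) ?ha ?hb ?addr0 //; lia.
Qed.

Lemma Gge_inv_entry {m} {a : 'rV[R]_n} : Gge m a ->
  forall i, (w i <= m)%N -> inv a 0 i = - a 0 i.
Proof.
move=> ha.
suff: forall k i, (w i <= k)%N -> (w i <= m)%N -> inv a 0 i = - a 0 i.
  by move=> h i hi; apply: (h (w i)).
elim=> [|k IH] i hk hm.
  by have := @gwt_pos _ G i; lia.
have e : mul a (inv a) 0 i = a 0 i + inv a 0 i.
  apply: add_low => j hj.
  have aj : a 0 j = 0 by apply: ha; lia.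
  by rewrite (IH j) ?aj ?oppr0 //; lia.
move: e; rewrite gmulxV zero_entry => /eqP.
by rewrite eq_sym addrC addr_eq0 => /eqP.
Qed.

Lemma Gge_inv {m} {a : 'rV[R]_n} : Gge m a -> Gge m (inv a).
Proof.
move=> ha j hj; rewrite (Gge_inv_entry ha) ?ha ?oppr0 //; lia.
Qed.

Fixpoint gpow (x : 'rV[R]_n) k := if k is k'.+1 then mul x (gpow x k') else 0.

Lemma gpowD x k l : gpow x (k + l) = mul (gpow x k) (gpow x l).
Proof. by elim: k => [|k IH] /=; rewrite ?gmul0x // IH gmulA. Qed.

Lemma gpow_dil r x k : 0 < r -> wdil w r (gpow x k) = gpow (wdil w r x) k.
Proof. by move=> r0; elim: k => [|k IH] /=; rewrite ?wdilx0 // gdil_morph // IH. Qed.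

Lemma gpow_w1 x k i : w i = 1%N -> gpow x k 0 i = k%:R * x 0 i.
Proof.
move=> wi; elim: k => [|k IH] /=; first by rewrite zero_entry mul0r.
by rewrite add_w1 // IH -[k.+1]addn1 natrD; ring.
Qed.

Lemma gpow_Gge {m} x k : Gge m x -> Gge m (gpow x k) /\
  forall i, (w i <= m)%N -> gpow x k 0 i = k%:R * x 0 i.
Proof.
move=> hx; elim: k => [|k [IH1 IH2]] /=.
  by split=> i _; rewrite zero_entry ?mul0r.
split; first exact: Gge_mul.
by move=> i hi; rewrite (Gge_add hx IH1) // IH2 // -[k.+1]addn1 natrD; ring.
Qed.

Definition Sdef (x : 'rV[R]_n) := mul x x = wdil w 2 x.

Lemma two_pow k : (1 < k)%N -> (2:R) ^+ k - 2 != 0.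
Proof.
move=> hk; have : (2:R) ^+ 2 <= 2 ^+ k by rewrite ler_eXn2l // ltr1n.
rewrite expr2 => h; apply/eqP => e; lra.
Qed.

Lemma S_unique x y : Sdef x -> Sdef y ->
  (forall j, w j = 1%N -> x 0 j = y 0 j) -> x = y.
Proof.
move=> Sx Sy h1.
suff: forall k i, (w i <= k)%N -> x 0 i = y 0 i.
  by move=> h; apply/rowP => i; apply: (h (w i)).
elim=> [|k IH] i hk.
  by have := @gwt_pos _ G i; lia.
have [wi1|wi1] := eqVneq (w i) 1%N; first exact: h1.
have wi2 : (1 < w i)%N by have := @gwt_pos _ G i; lia.
have e := @key i x x y y (fun j hj => conj (IH j ltac:(lia)) (IH j ltac:(lia))).
have ex : mul x x 0 i = 2 ^+ w i * x 0 i by rewrite Sx mxE.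
have ey : mul y y 0 i = 2 ^+ w i * y 0 i by rewrite Sy mxE.
rewrite ex ey in e.
apply/eqP; rewrite -subr_eq0.
suff : (2 ^+ w i - 2) * (x 0 i - y 0 i) == 0.
  by rewrite mulf_eq0 (negbTE (@two_pow (w i) wi2)).
move: e; set c := (2:R) ^+ w i => e.
by apply/eqP; rewrite mulrBr !mulrBl; lra.
Qed.

Definition Tmap (v x : 'rV[R]_n) : 'rV[R]_n :=
  \row_i (if w i == 1%N then v 0 i
          else (mul x x 0 i - x 0 i - x 0 i) / (2 ^+ w i - 2)).

Lemma Tmap_step (v a b : 'rV[R]_n) j : (forall j', (w j' < w j)%N -> a 0 j' = b 0 j') ->
  Tmap v a 0 j = Tmap v b 0 j.
Proof.
move=> h; rewrite !mxE; case: ifP => // _; congr (_ / _).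
by apply: key => j' hj'; split; apply: h.
Qed.

Lemma S_exists (v : 'rV[R]_n) : exists x, Sdef x /\ forall j, w j = 1%N -> x 0 j = v 0 j.
Proof.
have step k : forall j, (w j <= k)%N ->
    iter k (Tmap v) 0 0 j = iter k.+1 (Tmap v) 0 0 j.
  elim: k => [|k IH] j hj.
    by have := @gwt_pos _ G j; lia.
  rewrite (iterS k) (iterS k.+1); apply: Tmap_step => j' hj'; apply: IH; lia.
pose K := (\max_(i < n) w i)%N.
pose x := iter K (Tmap v) 0.
have fx : Tmap v x = x.
  by apply/rowP => j; rewrite /x -iterS; symmetry; apply: step; apply: leq_bigmax.
exists x; split; last first.
  by move=> j wj; rewrite -fx mxE wj eqxx.
apply/rowP => i; rewrite [RHS]mxE.
have [wi1|wi1] := eqVneq (w i) 1%N.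
  by rewrite add_w1 // wi1 expr1; ring.
have wi2 : (1 < w i)%N by have := @gwt_pos _ G i; lia.
have := congr1 (fun y : 'rV[R]_n => y 0 i) fx; rewrite /= mxE (negbTE wi1) => e.
have e2 : mul x x 0 i - x 0 i - x 0 i = x 0 i * (2 ^+ w i - 2).
  by rewrite -[in RHS]e divfK //; exact: two_pow.
have -> : mul x x 0 i = x 0 i * (2 ^+ w i - 2) + x 0 i + x 0 i.
  by rewrite -e2; ring.
ring.
Qed.

Lemma S_pow x k : Sdef x -> Sdef (gpow x k).
Proof.
move=> Sx.
have e : forall k, gpow (mul x x) k = gpow x (k + k).
  elim=> [|l IH] //=; by rewrite IH ?addnS ?addSn /= gmulA.
by rewrite /Sdef -gpowD -e Sx gpow_dil // ltr0Sn.
Qed.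

Lemma S_dil x r : 0 < r -> Sdef x -> Sdef (wdil w r x).
Proof.
move=> r0 Sx; rewrite /Sdef -gdil_morph // Sx !wdil_comp mulrC //.
Qed.

Lemma S_pow_dil x k : Sdef x -> gpow x k = wdil w k%:R x.
Proof.
move=> Sx; case: k => [|k]; first by rewrite /= wdil0x.
apply: S_unique; [exact: S_pow|apply: S_dil => //; exact: ltr0Sn|].
by move=> j wj; rewrite gpow_w1 // mxE wj expr1.
Qed.

Lemma S_nat_add x (k l : nat) : Sdef x ->
  mul (wdil w k%:R x) (wdil w l%:R x) = wdil w (k + l)%:R x.
Proof. by move=> Sx; rewrite -!S_pow_dil // gpowD. Qed.


Lemma curve_poly i (pa pb : 'I_n -> {poly R}) : exists P : {poly R},
  forall t, mul (\row_k (pa k).[t]) (\row_k (pb k).[t]) 0 i = P.[t].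
Proof.
have [s hs] := @gmul_poly _ G i.
pose pz (j : 'I_(n + n)) := match fintype.split j with inl k => pa k | inr k => pb k end.
exists (\sum_(m <- s) m.1 *: \prod_(j < n + n) (pz j) ^+ m.2 j) => t.
have := hs (row_mx (\row_k (pa k).[t]) (\row_k (pb k).[t])).
rewrite row_mxKl row_mxKr => ->.
rewrite horner_sum; apply: eq_bigr => m _.
rewrite hornerZ horner_prod; congr (_ * _); apply: eq_bigr => j _.
rewrite horner_exp /pz !mxE; case: (fintype.split j) => k; by rewrite mxE.
Qed.

Lemma eq_from_poly (f g : R -> R) :
  (exists P : {poly R}, forall t, f t = P.[t]) ->
  (exists Q : {poly R}, forall t, g t = Q.[t]) ->
  (forall k : nat, f k.+1%:R = g k.+1%:R) -> forall t, f t = g t.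
Proof.
move=> [P hP] [Q hQ] h t.
have : P - Q = 0.
  by apply: poly_nat_roots => k; rewrite hornerD hornerN -hP -hQ h subrr.
by move/eqP; rewrite subr_eq0 => /eqP PQ; rewrite hP hQ PQ.
Qed.

Lemma row_dil_poly (x : 'rV[R]_n) t :
  wdil w t x = \row_k ('X^(w k) * (x 0 k)%:P).[t].
Proof. by apply/rowP => k; rewrite !mxE hornerM hornerXn hornerC. Qed.

Lemma row_const_poly (x : 'rV[R]_n) t : x = \row_k ((x 0 k)%:P).[t].
Proof. by apply/rowP => k; rewrite !mxE hornerC. Qed.

Lemma S_curve x : Sdef x -> forall s t,
  mul (wdil w s x) (wdil w t x) = wdil w (s + t) x.
Proof.
move=> Sx.
have stepB (l : nat) s : mul (wdil w s x) (wdil w l.+1%:R x) = wdil w (s + l.+1%:R) x.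
  apply/rowP => i; move: s.
  apply: (@eq_from_poly (fun s => mul (wdil w s x) (wdil w l.+1%:R x) 0 i)
                       (fun s => wdil w (s + l.+1%:R) x 0 i)).
  - have [P hP] := curve_poly i (fun k => 'X^(w k) * (x 0 k)%:P)
                     (fun k => ((wdil w l.+1%:R x) 0 k)%:P).
    by exists P => t; rewrite -hP -row_dil_poly -row_const_poly.
  - exists (('X + (l.+1%:R)%:P) ^+ w i * (x 0 i)%:P) => t.
    by rewrite mxE hornerM horner_exp hornerD hornerX !hornerC.
  - by move=> k; rewrite /= S_nat_add // natrD.
move=> s t; apply/rowP => i; move: t.
apply: (@eq_from_poly (fun t => mul (wdil w s x) (wdil w t x) 0 i)
                     (fun t => wdil w (s + t) x 0 i)).
- have [P hP] := curve_poly i (fun k => ((wdil w s x) 0 k)%:P)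
                   (fun k => 'X^(w k) * (x 0 k)%:P).
  by exists P => t; rewrite -hP -row_dil_poly -row_const_poly.
- exists ((s%:P + 'X) ^+ w i * (x 0 i)%:P) => t.
  by rewrite mxE hornerM horner_exp hornerD hornerX !hornerC.
- by move=> k; rewrite /= stepB.
Qed.



Lemma range_homog (x : 'rV[R]_n) k : w k = 1%N -> x 0 k != 0 -> Sdef x ->
  homogeneous G (range (fun t : R => wdil w t x)).
Proof.
move=> wk xk Sx.
have hc := @S_curve x Sx.
split; [split; [|split]|split; [|split]].
- by exists 0 => //; rewrite wdil0x.
- by move=> _ _ [s _ <-] [t _ <-]; exists (s + t) => //; rewrite hc.
- move=> _ [s _ <-]; exists (- s) => //; symmetry; apply: cancel_inv.
  by rewrite hc subrr wdil0x.
- pose c := x 0 k.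
  have -> : range (fun t : R => wdil w t x) =
      \bigcap_(i in [set: 'I_n]) [set g : 'rV[R^o]_n |
          g 0 i - (('X * (c^-1)%:P) ^+ w i * (x 0 i)%:P).[g 0 k] = 0].
    apply/seteqP; split.
      move=> _ [t _ <-] i _ /=; rewrite !mxE hornerM horner_exp hornerM hornerX !hornerC.
      by rewrite wk expr1 mulfK // subrr.
    move=> g hg; exists (g 0 k / c) => //; apply/rowP => i.
    have := hg i I; rewrite /= hornerM horner_exp hornerM hornerX !hornerC mxE.
    by move/eqP; rewrite subr_eq0 => /eqP ->.
  apply: closed_bigI => i _.
  apply: (@preimage_closed _ _ (fun g : 'rV[R^o]_n =>
     g 0 i - (('X * (c^-1)%:P) ^+ w i * (x 0 i)%:P).[g 0 k]) [set 0]).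
    move=> g _.
    have := @continuousB R^o R^o _ (fun g : 'rV[R^o]_n => g 0 i)
      (fun g : 'rV[R^o]_n => (('X * (c^-1)%:P) ^+ w i * (x 0 i)%:P).[g 0 k]) g
      (@coord_continuous R^o 1 n 0 i g) (@coord_poly_cont R n _ k g).
    by [].
  exact: closed_eq.
- apply: connected_range.
  have -> : (fun t : R => (wdil w t x : 'rV[R^o]_n)) =
            (fun t => \row_i (('X ^+ w i * (x 0 i)%:P).[t] : R^o)).
    by apply/funext => t; apply/rowP => i; rewrite !mxE hornerM hornerXn hornerC.
  apply: row_cont => i; exact: poly_cont.
- move=> r _ r0 [t _ <-]; exists (r * t) => //.
  by rewrite /dil wdil_comp.
Qed.


Lemma coordker_homog k : w k = 1%N ->
  homogeneous G [set g : 'rV[R^o]_n | g 0 k = 0] /\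
  normal G [set g : 'rV[R^o]_n | g 0 k = 0] /\
  hhom_to_R G (fun g : 'rV[R^o]_n => g 0 k).
Proof.
move=> wk.
have hom : hhom_to_R G (fun g : 'rV[R^o]_n => g 0 k).
  split; first by move=> a b; rewrite add_w1.
  by move=> r a r0; rewrite /dil mxE wk expr1.
split; last split => //.
  split; [split; [|split]|split; [|split]].
  - by rewrite /= zero_entry.
  - by move=> a b /= ha hb; rewrite add_w1 // ha hb addr0.
  - by move=> a /= ha; rewrite inv_w1 // ha oppr0.
  - apply: (@preimage_closed _ _ (fun g : 'rV[R^o]_n => g 0 k) [set 0]).
      by move=> g _; exact: coord_continuous.
    exact: closed_eq.
  - have -> : [set g : 'rV[R^o]_n | g 0 k = 0] =
      \bigcup_(g in [set g : 'rV[R^o]_n | g 0 k = 0]) range (fun t : R => t *: g).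
      apply/seteqP; split.
        by move=> g hg; exists g => //; exists 1 => //; rewrite scale1r.
      by move=> _ [g hg [t _ <-]]; rewrite /= mxE hg mulr0.
    apply: bigcup_connected.
      by exists 0 => g _; exists 0 => //; rewrite scale0r.
    move=> g _; apply: connected_range.
    have -> : (fun t : R => t *: g) =
              (fun t => \row_i (('X * (g 0 i)%:P).[t] : R^o)).
      by apply/funext => t; apply/rowP => i; rewrite !mxE hornerM hornerX hornerC.
    apply: row_cont => i; exact: poly_cont.
  - by move=> r a r0 /= ha; rewrite /dil mxE ha mulr0.
move=> g a /= ha; rewrite add_w1 // add_w1 // inv_w1 // ha; ring.
Qed.

Lemma idem0 (p : 'rV[R]_n) : mul p p = p -> p = 0.
Proof.
move=> h; by rewrite -[p](gmul0x) -(gmulVx p) -gmulA h gmulVx.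
Qed.

Lemma phi_props (phi : 'rV[R^o]_n -> R) : hhom_to_R G phi ->
  phi 0 = 0 /\ (forall a, phi (inv a) = - phi a) /\
  (forall a k, phi (gpow a k) = k%:R * phi a).
Proof.
move=> [hadd hdil].
have p0 : phi 0 = 0.
  have e := hadd 0 0; rewrite gmul0x in e.
  by apply: (addrI (phi 0)); rewrite addr0 -e.
split => //; split.
  move=> a; have := hadd a (inv a); rewrite gmulxV p0 => /eqP.
  by rewrite eq_sym addrC addr_eq0 => /eqP.
move=> a; elim=> [|k IH] /=; first by rewrite p0 mul0r.
by rewrite hadd IH -[k.+1]addn1 natrD; ring.
Qed.

Lemma maxw_ge i : (w i <= \max_(j < n) w j)%N.
Proof. exact: leq_bigmax. Qed.

Lemma phi_Gge (phi : 'rV[R^o]_n -> R) : hhom_to_R G phi ->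
  forall h, Gge 2 h -> phi h = 0.
Proof.
move=> hphi; have [p0 [pinv ppow]] := @phi_props phi hphi.
have [hadd hdil] := hphi.
pose K := (\max_(j < n) w j)%N.
suff: forall d m h, (K.+1 <= m + d)%N -> (2 <= m)%N -> Gge m h -> phi h = 0.
  by move=> H h hh; apply: (H K.+1 2%N h) => //; lia.
elim=> [|d IH] m h hK hm hh.
  have -> : h = 0; last exact: p0.
  apply/rowP => j; rewrite zero_entry; apply: hh.
  have := maxw_ge j; rewrite addn0 in hK; rewrite -/K; lia.
pose y := gpow h (2 ^ m)%N.
pose z := wdil w 2 h.
pose e := mul (inv y) z.
have [yG yE] := @gpow_Gge m h (2 ^ m)%N hh.
have zG : Gge m z by move=> j hj; rewrite mxE hh // mulr0.
have eG : Gge m.+1 e.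
  move=> j hj; have [hjm|hjm] := ltnP (w j) m.
    by apply: (Gge_mul (Gge_inv yG) zG).
  have wj : w j = m by lia.
  rewrite /e (Gge_add (Gge_inv yG) zG) ?wj // (Gge_inv_entry yG) ?wj //.
  by rewrite yE ?wj // wdilE wj natrX addNr.
have pe : phi e = 0 by apply: (IH m.+1) => //; lia.
have ze : z = mul y e by rewrite /e gmulA gmulxV gmul0x.
have : phi z = phi y + phi e by rewrite ze hadd.
rewrite pe addr0 /z hdil // /y ppow natrX => /eqP.
rewrite -subr_eq0 -mulrBl mulf_eq0 => /orP [|/eqP //].
by move=> h2; move: (@two_pow m hm); rewrite -oppr_eq0 opprB h2.
Qed.


Lemma additive_homog (f : R -> R) : (forall s t, f (s + t) = f s + f t) ->
  (forall r t, 0 < r -> f (r * t) = r * f t) -> forall t, f t = t * f 1.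
Proof.
move=> fa fh.
have f0 : f 0 = 0.
  have e := fa 0 0; rewrite addr0 in e.
  by apply: (addrI (f 0)); rewrite addr0 -e.
move=> t; case: (ltrgt0P t) => [t0|t0|->].
- by rewrite -[in LHS](mulr1 t) fh.
- have e := fa t (- t); rewrite subrr f0 in e.
  have e2 : f (- t) = - t * f 1 by rewrite -[in LHS](mulr1 (- t)) fh // oppr_gt0.
  rewrite e2 in e; lra.
- by rewrite f0 mul0r.
Qed.

Lemma add_psi0 (psi : R -> 'rV[R]_n) :
  (forall s t, psi (s + t) = mul (psi s) (psi t)) -> psi 0 = 0.
Proof. by move=> h; apply: idem0; rewrite -h addr0. Qed.

Lemma compl_gen (psi : R -> 'rV[R]_n) (phi : 'rV[R]_n -> R)
    (H N : set 'rV[R^o]_n) c :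
  c != 0 -> (forall s t, psi (s + t) = mul (psi s) (psi t)) ->
  (forall x y, phi (mul x y) = phi x + phi y) ->
  (forall t, phi (psi t) = t * c) ->
  (forall x, H x <-> exists t, psi t = x) -> (forall x, N x <-> phi x = 0) ->
  complementary G H N.
Proof.
move=> c0 hpsi hphi hpc hH hN.
have p0 : phi 0 = 0.
  have e := hphi 0 0; rewrite gmul0x in e.
  by apply: (addrI (phi 0)); rewrite addr0 -e.
have pinv a : phi (inv a) = - phi a.
  have := hphi a (inv a); rewrite gmulxV p0 => /eqP.
  by rewrite eq_sym addrC addr_eq0 => /eqP.
split.
  move=> g; pose a := psi (phi g / c).
  exists a, (mul (inv a) g); split; first by apply/hH; exists (phi g / c).
  split; last by rewrite gmulA gmulxV gmul0x.
  by apply/hN; rewrite hphi pinv hpc divfK // addNr.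
move=> x /hH [t <-] /hN; rewrite hpc => /eqP; rewrite mulf_eq0 (negbTE c0) orbF.
by move=> /eqP ->; exact: add_psi0.
Qed.

Lemma S_w1_nonzero x : Sdef x -> x != 0 -> exists k, w k = 1%N /\ x 0 k != 0.
Proof.
move=> Sx xn.
have [/existsP [k /andP [/eqP wk xk]]|none] :=
  boolP [exists k, (w k == 1%N) && (x 0 k != 0)]; first by exists k.
exfalso; move/eqP: xn; apply; apply: S_unique => // [|j wj].
  by rewrite /Sdef gmul0x wdilx0.
move/existsPn: none => /(_ j); rewrite wj eqxx /= negbK => /eqP ->.
by rewrite zero_entry.
Qed.

Lemma exists_w1 : (0 < n)%N -> stratified G -> exists k, w k = 1%N.
Proof.
move=> hn hs.
have [/existsP [k /eqP wk]|none] := boolP [exists k, w k == 1%N]; first by exists k.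
exfalso.
pose i0 : 'I_n := Ordinal hn.
have wi0 : (1 < w i0)%N.
  have := @gwt_pos _ G i0; move/existsPn: none => /(_ i0); lia.
have := hs (w i0).-1 ltac:(lia); rewrite prednK; last by lia.
move=> E.
pose e : 'rV[R^o]_n := \row_j (if j == i0 then 1 else 0).
have : layer G (w i0) e.
  by move=> i; rewrite mxE; case: (i =P i0) => [->|//]; rewrite eqxx.
rewrite E => -[s [hs' es]].
have bz : forall Y, bracket G 0 Y = 0.
  move=> Y; rewrite /bracket.
  have -> : (fun t : R => t^-2 *: gcomm G (t *: (0 : 'rV[R^o]_n)) (t *: Y)) =
            (fun _ => 0).
    apply/funext => t; rewrite scaler0 /gcomm gmul0x.
    have -> : ginv G (0 : 'rV[R^o]_n) = 0 by exact: inv0.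
    by rewrite gmulx0 gmulxV scaler0.
  by rewrite lim_cst //; apply: norm_hausdorff.
have : e = 0.
  rewrite es big_seq big1 // => p /hs' [h1 _].
  have -> : p.1 = 0.
    apply/rowP => i; rewrite zero_entry; apply: h1.
    by move/existsPn: none => /(_ i).
  exact: bz.
move/(congr1 (fun v : 'rV[R^o]_n => v 0 i0)); rewrite mxE eqxx zero_entry.
by move/eqP; rewrite oner_eq0.
Qed.


Lemma main_thm :
  (0 < gdim G)%N -> stratified G ->
  ( (exists N, homogeneous G N /\ normal G N /\ quotient_is_R G N) /\
    (forall N, homogeneous G N -> normal G N -> quotient_is_R G N ->
       exists H, homogeneous G H /\ complementary G H N) ) /\
  ( (exists H, homogeneous G H /\ subgroup_is_R G H) /\
    (forall H, homogeneous G H -> subgroup_is_R G H ->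
       exists N, homogeneous G N /\ normal G N /\ complementary G H N) ).
Proof.
move=> hn hs.
have [k wk] := exists_w1 hn hs.
have [x [Sx xw1]] := S_exists (\row_j (if j == k then (1:R) else 0)).
have xk : x 0 k = 1 by rewrite xw1 // mxE eqxx.
have xk0 : x 0 k != 0 by rewrite xk oner_neq0.
have [Nh [Nn Nphi]] := @coordker_homog k wk.
split; split.
- exists [set g | g 0 k = 0]; split => //; split => //.
  exists (fun g => g 0 k); split => //; split => //.
  by move=> t; exists (wdil w t x); rewrite wdilE wk expr1 xk mulr1.
- move=> N hN nN [phi [hphi [hsurj hker]]].
  have [g g1] := hsurj 1.
  have [y [Sy yw1]] := S_exists g.
  have [hadd hdil] := hphi.
  have [p0 [pinv _]] := @phi_props phi hphi.
  have py : phi y = 1.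
    pose e := mul (inv y) g.
    have eG : Gge 2 e.
      move=> j hj; have wj : w j = 1%N by have := @gwt_pos _ G j; lia.
      by rewrite /e add_w1 // inv_w1 // yw1 // addNr.
    have := @phi_Gge phi hphi e eG; rewrite /e hadd pinv g1 => /eqP.
    by rewrite addrC subr_eq0 => /eqP.
  have yn : y != 0.
    by apply/eqP => y0; move: py; rewrite y0 p0 => /eqP; rewrite eq_sym oner_eq0.
  have [k' [wk' yk']] := @S_w1_nonzero y Sy yn.
  exists (range (fun t : R => wdil w t y)); split; first exact: (@range_homog y k' wk' yk' Sy).
  apply: (@compl_gen (fun t => wdil w t y) phi _ _ 1) => //.
  + by move=> s t; rewrite (@S_curve y Sy).
  + move=> t; rewrite (@additive_homog (fun t => phi (wdil w t y))) ?wdil1 ?py //.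
      by move=> s u; rewrite -(@S_curve y Sy) hadd.
    by move=> r u r0 /=; rewrite -wdil_comp -hdil.
  + by move=> z; split => [[t _ <-]|[t <-]]; exists t.
  + by move=> z; rewrite hker.
- exists (range (fun t : R => wdil w t x)); split; first exact: (@range_homog x k wk xk0 Sx).
  exists (fun t : R => wdil w t x); split; [split|split].
  + by move=> s t; rewrite (@S_curve x Sx).
  + by move=> r t r0; rewrite /dil wdil_comp.
  + move=> s t /(congr1 (fun v : 'rV[R]_n => v 0 k)).
    by rewrite !wdilE wk !expr1 xk !mulr1.
  + by move=> z; split => [[t _ <-]|[t <-]]; exists t.
- move=> H hH [psi [[hpa hpd] [pinj hHe]]].
  pose x1 := psi 1.
  have ps0 : psi 0 = 0 := @add_psi0 psi hpa.
  have Sx1 : Sdef x1.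
    rewrite /Sdef /x1 -hpa.
    have -> : (1:R) + 1 = 2 * 1 by rewrite mulr1.
    by rewrite hpd.
  have x1n : x1 != 0.
    apply/eqP => e; have := pinj 1 0; rewrite -/x1 e ps0 => /(_ erefl) /eqP.
    by rewrite oner_eq0.
  have [k1 [wk1 xk1]] := @S_w1_nonzero x1 Sx1 x1n.
  have [Nh1 [Nn1 [Nadd Ndil]]] := @coordker_homog k1 wk1.
  exists [set g | g 0 k1 = 0]; split => //; split => //.
  apply: (@compl_gen psi (fun g => g 0 k1) _ _ (x1 0 k1)) => //.
  + move=> t; rewrite (@additive_homog (fun t => psi t 0 k1)) //.
      by move=> s u; rewrite hpa Nadd.
    by move=> r u r0 /=; rewrite hpd // Ndil.
Qed.

End Alg.

Theorem proposition11p14 (R : realType) (G : gradedGroup R) :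
  (0 < gdim G)%N -> stratified G ->
  ( (exists N, homogeneous G N /\ normal G N /\ quotient_is_R G N) /\
    (forall N, homogeneous G N -> normal G N -> quotient_is_R G N ->
       exists H, homogeneous G H /\ complementary G H N) ) /\
  ( (exists H, homogeneous G H /\ subgroup_is_R G H) /\
    (forall H, homogeneous G H -> subgroup_is_R G H ->
       exists N, homogeneous G N /\ normal G N /\ complementary G H N) ).
Proof. exact: main_thm. Qed.
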